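(* Let $\mathbb{H}$ be a real Hilbert space, let $\mathbf{x}$ be a random vector in $\mathbb{H}$ with $\mathbb{E}[\|\mathbf{x}\|^2]<\infty$, and let $\mathcal{S}$ be the operator $\mathcal{S}\boldsymbol{\theta}=\mathbb{E}[\langle\boldsymbol{\theta},\mathbf{x}\rangle\mathbf{x}]$. Assume $\mathcal{S}$ has an orthonormal basis $(\mathbf{e}_i)$ of eigenvectors with eigenvalues $\lambda_i$ satisfying $0<\lambda_i<\tfrac12$ for all $i$. Let $\gamma\in(0,1)$ and $\mathcal{T}=\mathrm{Id}-\gamma\mathcal{S}$. Let $\boldsymbol{\theta}\in\mathbb{H}$, $\beta\in\mathbb{R}$, and let $(t_n)_{n\ge1}$ be a sequence of positive numbers with $\sum_{n\ge1}\frac{1}{n t_n}<\infty$. If $\|\mathcal{T}^n\boldsymbol{\theta}\|^2\le \frac{1}{n^\beta t_n}$ for every $n\ge1$, then $\|\boldsymbol{\theta}\|_\beta^2<\infty$.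
   Context: For $\boldsymbol{\theta}=\sum_i\theta_i\mathbf{e}_i$ and $\beta\in\mathbb{R}$, $\|\boldsymbol{\theta}\|_\beta^2:=\langle\boldsymbol{\theta},\mathcal{S}^{-\beta}\boldsymbol{\theta}\rangle=\sum_i\lambda_i^{-\beta}\theta_i^2\in[0,\infty]$, where $\mathcal{S}^{\kappa}\boldsymbol{\theta}=\sum_i\lambda_i^{\kappa}\theta_i\mathbf{e}_i$. Note $\mathcal{T}^n\boldsymbol{\theta}$ equals the expectation $\mathbb{E}[\boldsymbol{\theta}(n)]$ of the random iteration $\boldsymbol{\theta}(0)=\boldsymbol{\theta}$, $\boldsymbol{\theta}(k+1)=\boldsymbol{\theta}(k)-\gamma\langle\boldsymbol{\theta}(k),\mathbf{x}(k)\rangle\mathbf{x}(k)$ with $\mathbf{x}(k)$ i.i.d. copies of $\mathbf{x}$. *)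

(* Defs.v *)
From HB Require Import structures.
From mathcomp Require Import all_boot all_order all_algebra.
From mathcomp Require Import all_classical all_reals all_analysis.
Set Implicit Arguments. Unset Strict Implicit. Unset Printing Implicit Defensive.
Import Order.TTheory GRing.Theory Num.Theory.
Import numFieldNormedType.Exports.
Local Open Scope ring_scope.

(* A complete normed space whose norm comes from such an inner product
   is a real Hilbert space. *)
Definition inner_product_of_norm (R : realType) (V : normedModType R)
  (ip : V -> V -> R) : Prop :=
  [/\ forall u v, ip u v = ip v u,
      forall (a : R) (u v w : V), ip (a *: u + v) w = a * ip u w + ip v w
    & forall v, `|v| ^+ 2 = ip v v].

Definition orthonormal_basis (R : realType) (V : normedModType R)
  (ip : V -> V -> R) (I : Type) (e : I -> V) : Prop :=
  (forall i j, ip (e i) (e j) = if pselect (i = j) then 1 else 0) /\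
  (forall v, (forall i, ip v (e i) = 0) -> v = 0).

Definition borel_measurable_fun d (Om : measurableType d) (V : topologicalType)
  (x : Om -> V) : Prop :=
  forall U : set V, open U -> measurable (x @^-1` U).

(* Main.v *)
Require Import Defs.
From HB Require Import structures.
From mathcomp Require Import all_boot all_order all_algebra.
From mathcomp Require Import all_classical all_reals all_analysis.
From mathcomp Require Import ring lra zify.
Import Order.TTheory GRing.Theory Num.Theory.
Import numFieldNormedType.Exports.
Local Open Scope classical_set_scope.
Local Open Scope ring_scope.

Lemma ip0l (R : realType) (H : normedModType R) (ip : H -> H -> R) :
  inner_product_of_norm ip -> forall w, ip 0 w = 0.
Proof.
case=> _ hl _ w; have := hl 1 0 0 w.
rewrite scaler0 addr0 mul1r => h; lra.
Qed.
Arguments ip0l {R H ip}.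

Lemma ipDl (R : realType) (H : normedModType R) (ip : H -> H -> R) :
  inner_product_of_norm ip -> forall u v w, ip (u + v) w = ip u w + ip v w.
Proof. by move=> hip u v w; case: (hip) => _ hl _; rewrite -[u]scale1r hl mul1r scale1r. Qed.
Arguments ipDl {R H ip}.

Lemma ipZl (R : realType) (H : normedModType R) (ip : H -> H -> R) :
  inner_product_of_norm ip -> forall a u w, ip (a *: u) w = a * ip u w.
Proof.
move=> hip a u w; case: (hip) => _ hl _.
by rewrite -[a *: u]addr0 hl ip0l // addr0.
Qed.
Arguments ipZl {R H ip}.

Lemma ipBl (R : realType) (H : normedModType R) (ip : H -> H -> R) :
  inner_product_of_norm ip -> forall u v w, ip (u - v) w = ip u w - ip v w.
Proof.
move=> hip u v w; rewrite -scaleN1r ipDl // ipZl //; lra.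
Qed.
Arguments ipBl {R H ip}.

Lemma ip_suml (R : realType) (H : normedModType R) (ip : H -> H -> R)
  (J : Type) (s : seq J) (f : J -> H) w :
  inner_product_of_norm ip ->
  ip (\sum_(j <- s) f j) w = \sum_(j <- s) ip (f j) w.
Proof.
move=> hip; elim: s => [|a s IH]; first by rewrite !big_nil ip0l.
by rewrite !big_cons ipDl // IH.
Qed.

Lemma ipC (R : realType) (H : normedModType R) (ip : H -> H -> R) :
  inner_product_of_norm ip -> forall u v, ip u v = ip v u.
Proof. by case. Qed.
Arguments ipC {R H ip}.

Lemma bessel (R : realType) (H : normedModType R) (ip : H -> H -> R)
  (I : choiceType) (e : I -> H) (s : seq I) (v : H) :
  inner_product_of_norm ip -> orthonormal_basis ip e -> uniq s ->
  \sum_(i <- s) ip v (e i) ^+ 2 <= `|v| ^+ 2.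
Proof.
move=> hip [hon _] us.
set c := fun i => ip v (e i).
set y := \sum_(i <- s) c i *: e i.
have hy : forall j, j \in s -> ip y (e j) = c j.
  have hd : forall i j, ip (e i) (e j) = (i == j)%:R.
    by move=> i j; rewrite hon; case: pselect => [h|/eqP/negbTE ->] /=; [by rewrite h eqxx | by []].
  move=> j js; rewrite /y ip_suml //.
  rewrite (bigD1_seq j) //= ipZl // hd eqxx mulr1 big1 ?addr0 // => i ij.
  by rewrite ipZl // hd (negbTE ij) mulr0.
have hyy : ip y y = \sum_(i <- s) c i ^+ 2.
  rewrite {1}/y ip_suml //; rewrite big_seq_cond [RHS]big_seq_cond.
  apply: eq_bigr => i /andP[iS _]; rewrite ipZl // (ipC hip (e i)) hy // expr2.
have hyv : ip y v = \sum_(i <- s) c i ^+ 2.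
  rewrite /y ip_suml //; apply: eq_bigr => i _.
  by rewrite ipZl // (ipC hip (e i)) expr2.
case: (hip) => _ _ hn.
have h0 : 0 <= ip (v - y) (v - y) by rewrite -hn; apply: exprn_ge0.
rewrite (ipBl hip v y) in h0.
rewrite (ipC hip v (v - y)) (ipC hip y (v - y)) in h0.
rewrite (ipBl hip v y v) (ipBl hip v y y) in h0.
rewrite hyy hyv (ipC hip v y) hyv in h0.
rewrite hn /c in h0 *.
by rewrite subrr subr0 subr_ge0 in h0.
Qed.

Lemma pow_lb (R : realType) (b y : R) : 1 <= y <= 2 ->
  expR (- (`|b| * ln 2)) <= y `^ b.
Proof.
move=> /andP[y1 y2].
have y0 : 0 < y by lra.
rewrite /powR ifF; last by apply/negbTE; rewrite gt_eqF.
rewrite ler_expR.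
have h1 : 0 <= ln y by apply: ln_ge0.
have h2 : ln y <= ln 2.
  by rewrite ler_ln // posrE; lra.
have [b0|b0] := leP 0 b.
  rewrite ger0_norm //; nra.
rewrite ltr0_norm //; nra.
Qed.

Lemma q_lb (R : realType) (a : R) (n : nat) : 0 < a < 2^-1 -> a * n%:R <= 2 ->
  expR (-8) <= ((1 - a) ^+ 2) ^+ n.
Proof.
move=> /andP[a0 a2] an.
set E := expR (- (2 * a)).
have E0 : 0 < E by apply: expR_gt0.
have hE1 : E * (1 + 2 * a) <= 1.
  have := expR_ge1Dx (2 * a) => h.
  have : E * expR (2 * a) = 1 by rewrite /E expRN mulVf // gt_eqF // expR_gt0.
  nra.
have hE : E <= 1 - a by nra.
apply: (@le_trans _ _ ((E ^+ 2) ^+ n)); last first.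
  apply: lerXn2r; rewrite ?nnegrE ?exprn_ge0 //; try lra.
  apply: lerXn2r; rewrite ?nnegrE //; lra.
rewrite -exprM -expRM_natr /E ler_expR natrM.
have n0 : 0 <= n%:R :> R by apply: ler0n.
nra.
Qed.
Arguments pow_lb {R}.
Arguments q_lb {R}.

Definition Kc (R : realType) (b : R) := expR (- (`|b| * ln 2)) * expR (-8) / 2.
Arguments Kc {R}.

Lemma Kc_gt0 (R : realType) (b : R) : 0 < Kc b.
Proof. by rewrite /Kc !mulr_gt0 ?expR_gt0 ?invr_gt0. Qed.

Lemma le_mid (R : realDomainType) (x y z w : R) :
  0 <= x -> 0 <= z -> w <= y -> w <= x + (y + z).
Proof. move=> *; lra. Qed.

Lemma key (R : realType) (b g l : R) :
  0 < l < 2^-1 -> 0 < g < 1 ->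
  exists N : nat, forall N', (N <= N')%N ->
   Kc b * l `^ (- b) <=
   \sum_(0 <= k < N') ((k.+1)%:R `^ b / (k.+1)%:R * ((1 - g * l) ^+ 2) ^+ k.+1).
Proof.
move=> /andP[l0 l2] /andP[g0 g1].
set a := g * l.
have a0 : 0 < a by rewrite mulr_gt0.
have al : a < l by rewrite /a -[ltRHS]mul1r ltr_pM2r.
have li0 : 0 <= l^-1 by rewrite invr_ge0 ltW.
have li2 : 2 < l^-1.
  by rewrite -[2]invrK ltf_pV2 ?posrE //; lra.
set m := Num.truncn (l^-1).
have /andP[hm1 hm2] := truncn_itv li0.
rewrite -/m in hm1 hm2.
have m0 : (0 < m)%N by rewrite truncn_gt0; lra.
have mr0 : 0 < m%:R :> R by rewrite ltr0n.
have ml1 : m%:R * l <= 1.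
  by rewrite -ler_pdivlMr // div1r.
have ml2 : 1 < m.+1%:R * l.
  by rewrite -ltr_pdivrMr // div1r.
exists (m + m)%N => N' hN'.
have F0 : forall k, 0 <= (k.+1)%:R `^ b / (k.+1)%:R * ((1 - g * l) ^+ 2) ^+ k.+1.
  move=> k; rewrite mulr_ge0 ?divr_ge0 ?powR_ge0 ?exprn_ge0 ?sqr_ge0 //; rewrite -/a; lra.
have hmN : (m <= N')%N by apply: leq_trans hN'; rewrite leq_addr.
rewrite (@big_cat_nat _ _ _ m 0 N' _ _ (leq0n m) hmN).
rewrite (@big_cat_nat _ _ _ (m + m) m N' _ _ (leq_addr m m) hN').
apply: le_mid; first (by apply: sumr_ge0 => i _; apply: F0);
  first (by apply: sumr_ge0 => i _; apply: F0).
apply: (@le_trans _ _ (\sum_(m <= i < m + m) (Kc b * l `^ (- b) / m%:R))).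
  rewrite sumr_const_nat addnK.
  have -> : forall x : R, x / m%:R *+ m = x.
    by move=> x; rewrite -mulr_natr mulfVK // lt0r_neq0.
  by [].
apply: ler_sum_nat => k /andP[km kmm].
set n := k.+1.
have hn1 : m.+1%:R <= n%:R :> R by rewrite ler_nat.
have hn2 : n%:R <= (m + m)%:R :> R by rewrite ler_nat.
have n0 : 0 < n%:R :> R by rewrite ltr0n.
have nl1 : 1 <= n%:R * l.
  by apply: le_trans (ltW ml2) _; rewrite ler_pM2r.
have nl2 : n%:R * l <= 2.
  apply: le_trans (_ : (m + m)%:R * l <= 2); first by rewrite ler_pM2r.
  by rewrite natrD mulrDl; lra.
have hp := pow_lb b (n%:R * l) ltac:(lra).
have an : a * n%:R <= 2.
  apply: le_trans nl2; rewrite mulrC ler_pM2l //; exact: ltW.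
have hq := q_lb a n (ltac:(lra) : 0 < a < 2^-1) an.
rewrite (powRM _ (ler0n _ _) (ltW l0)) in hp.
have hl : l `^ b * l `^ (- b) = 1 by rewrite powRN mulfV // gt_eqF // powR_gt0.
have lb0 : 0 < l `^ (- b) by rewrite powR_gt0.
have lb1 : 0 < l `^ b by rewrite powR_gt0.
set c0 := expR (- (`|b| * ln 2)) in hp.
have c00 : 0 < c0 by apply: expR_gt0.
have hP : c0 * l `^ (- b) <= n%:R `^ b.
  apply: le_trans (_ : _ <= n%:R `^ b * l `^ b * l `^ (- b)) _; first by rewrite ler_pM2r.
  by rewrite -mulrA hl mulr1.
have hN : (2 * m%:R)^-1 <= n%:R^-1 :> R.
  rewrite lef_pV2 ?posrE ?mulr_gt0 //; rewrite natrD in hn2; lra.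
apply: (@le_trans _ _ ((c0 * l `^ (- b)) * (2 * m%:R)^-1 * expR (-8))).
  rewrite /Kc /c0 invfM le_eqVlt; apply/orP; left; apply/eqP; ring.
rewrite -mulrA -[_ / _ * _]mulrA.
apply: ler_pM => //; first by rewrite mulr_ge0 // ltW.
apply: ler_pM => //; by rewrite ?invr_ge0 ?expR_ge0 ?mulr_ge0 ?ltW.
Qed.
Arguments Kc_gt0 {R}.
Arguments key {R}.

Theorem theorem2 (R : realType) (H : completeNormedModType R) (ip : H -> H -> R)
  (d : measure_display) (Om : measurableType d) (P : probability Om R)
  (x : Om -> H) (S : H -> H) (I : choiceType) (e : I -> H) (lam : I -> R)
  (gamma : R) (theta : H) (beta : R) (t : nat -> R) :
  inner_product_of_norm ip ->
  borel_measurable_fun x ->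
  (\int[P]_w ((`|x w| ^+ 2)%:E) < +oo)%E ->
  (forall th ph : H,
      ((ip (S th) ph)%:E = \int[P]_w ((ip th (x w) * ip (x w) ph)%:E))%E) ->
  orthonormal_basis ip e ->
  (forall i, S (e i) = lam i *: e i) ->
  (forall i, 0 < lam i < 2^-1) ->
  0 < gamma < 1 ->
  (forall n, (0 < n)%N -> 0 < t n) ->
  cvgn (series (fun n : nat => ((n.+1)%:R * t n.+1)^-1)) ->
  (forall n, (0 < n)%N ->
     `|iter n (fun v => v - gamma *: S v) theta| ^+ 2
       <= ((n%:R `^ beta) * t n)^-1) ->
  (\esum_(i in [set: I]) ((lam i `^ (- beta)) * ip theta (e i) ^+ 2)%:E < +oo)%E.
Proof.
move=> hip _ _ hS hon hSe hlam hg ht hcv hT.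
have hSi : forall v i, ip (S v) (e i) = lam i * ip v (e i).
  move=> v i; have h1 := hS v (e i); have h2 := hS (e i) v.
  have : ip (S v) (e i) = ip (S (e i)) v.
    suff : ((ip (S v) (e i))%:E = (ip (S (e i)) v)%:E)%E by case.
    rewrite h1 h2; apply: eq_integral => w _.
    by rewrite (ipC hip v) (ipC hip (x w) (e i)) mulrC.
  by move=> ->; rewrite hSe ipZl // (ipC hip (e i)).
have hit : forall n i, ip (iter n (fun v => v - gamma *: S v) theta) (e i)
    = (1 - gamma * lam i) ^+ n * ip theta (e i).
  move=> n i; elim: n => [|n IH]; first by rewrite expr0 mul1r.
  rewrite iterS ipBl // ipZl // hSi IH exprS; ring.
set u := fun n : nat => ((n.+1)%:R * t n.+1)^-1.
have u0 : forall n, 0 <= u n.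
  by move=> n; rewrite /u invr_ge0 mulr_ge0 // ltW // ht.
set B := limn (series u).
have hB : forall N, series u N <= B.
  apply: nondecreasing_cvgn_le => //.
  by apply: nondecreasing_series => n _ _; apply: u0.
have K0 := Kc_gt0 beta.
have hbnd : forall s : seq I, uniq s ->
    \sum_(i <- s) lam i `^ (- beta) * ip theta (e i) ^+ 2 <= B / Kc beta.
  move=> s us.
  have [Nf hNf] := boolp.choice (fun i => key beta gamma (lam i) (hlam i) hg).
  set N := \max_(i <- s) Nf i.
  have hNs : forall i, i \in s -> (Nf i <= N)%N.
    by move=> i iS; rewrite /N; apply: leq_bigmax_seq.
  rewrite ler_pdivlMr //.
  apply: le_trans (hB N).
  rewrite mulr_suml.
  set G := fun i => \sum_(0 <= k < N)
     ((k.+1)%:R `^ beta / (k.+1)%:R * ((1 - gamma * lam i) ^+ 2) ^+ k.+1).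
  apply: (@le_trans _ _ (\sum_(i <- s) G i * ip theta (e i) ^+ 2)).
    rewrite big_seq_cond [X in _ <= X]big_seq_cond; apply: ler_sum => i /andP[iS _].
    rewrite mulrAC ler_wpM2r ?sqr_ge0 // mulrC; apply: hNf; exact: hNs.
  rewrite /G.
  under eq_bigr do rewrite big_distrl /=.
  rewrite exchange_big /= /series /=.
  apply: ler_sum => k _.
  under eq_bigr do rewrite -mulrA.
  rewrite -mulr_sumr.
  have hk := hT k.+1 isT.
  have hb := @bessel _ _ ip _ e s (iter k.+1 (fun v => v - gamma *: S v) theta) hip hon us.
  have -> : \sum_(i <- s) ((1 - gamma * lam i) ^+ 2) ^+ k.+1 * ip theta (e i) ^+ 2
      = \sum_(i <- s) ip (iter k.+1 (fun v => v - gamma *: S v) theta) (e i) ^+ 2.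
    apply: eq_bigr => i _; rewrite hit exprMn [RHS]exprMn; congr (_ * _); by rewrite expr2.
  have kp : 0 < (k.+1)%:R `^ beta by rewrite powR_gt0.
  have k0 : 0 < (k.+1)%:R :> R by rewrite ltr0n.
  apply: (@le_trans _ _ ((k.+1)%:R `^ beta / (k.+1)%:R * ((k.+1)%:R `^ beta * t k.+1)^-1)).
    rewrite ler_pM2l ?divr_gt0 //; exact: le_trans hb hk.
  rewrite /u le_eqVlt; apply/orP; left; apply/eqP.
  have hPP : (k.+1)%:R `^ beta * ((k.+1)%:R `^ beta)^-1 = 1 by rewrite mulfV // gt_eqF.
  rewrite !invfM.
  transitivity ((k.+1)%:R `^ beta * ((k.+1)%:R `^ beta)^-1 * ((k.+1)%:R^-1 * (t k.+1)^-1)).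
    ring.
  by rewrite hPP mul1r.
apply: (le_lt_trans _ (ltry (B / Kc beta))).
apply: ge_ereal_sup => y [A [finA _] <-].
rewrite fsbig_finite // sumEFin lee_fin.
apply: hbnd; exact: finmap.fset_uniq.
Qed.
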